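(* Let $c,d\in\mathbb{R}^n$ be distinct nonzero vectors such that the line segment $[c,d]$ does not contain $0$. Run the following iteration: if $c^Td>0$, terminate (declaring $0\notin[c,d]$); otherwise set $e=c-d$, $\beta=c^Te$, $d_+=d-(c^Td)\big(\frac{e}{\beta}-\frac{c}{\|c\|\sqrt\beta}\big)$, $c_+=c-(c^Tc)\big(\frac{e}{\beta}-\frac{c}{\|c\|\sqrt\beta}\big)$, then replace $c$ by $d_+$ and $d$ by $c_+$, and repeat. Then the iteration terminates (with the correct declaration $0\notin[c,d]$) after a number of iterations not exceeding $$\frac{\|c-d\|^4}{\|c\|^2\|d\|^2-(c^Td)^2},$$ where $c,d$ here denote the original vectors.
   Context: $[c,d]$ denotes the closed line segment joining $c$ and $d$; $\|\cdot\|$ is the Euclidean norm. *)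

(* Defs.v *)
From HB Require Import structures.
From mathcomp Require Import all_boot all_order all_algebra.
From mathcomp Require Import reals.
Set Implicit Arguments. Unset Strict Implicit. Unset Printing Implicit Defensive.
Import Order.TTheory GRing.Theory Num.Theory.
Local Open Scope ring_scope.

Definition dotv (R : realType) (n : nat) (u v : 'rV[R]_n) : R :=
  \sum_(i < n) u 0 i * v 0 i.

Definition normv (R : realType) (n : nat) (u : 'rV[R]_n) : R :=
  Num.sqrt (dotv u u).

Definition iter_step (R : realType) (n : nat) (p : 'rV[R]_n * 'rV[R]_n)
  : 'rV[R]_n * 'rV[R]_n :=
  let c := p.1 in
  let d := p.2 in
  let e := c - d in
  let beta := dotv c e in
  let w := beta^-1 *: e - (normv c * Num.sqrt beta)^-1 *: c in
  let dplus := d - dotv c d *: w in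
  let cplus := c - dotv c c *: w in
  (dplus, cplus).

Definition iterate (R : realType) (n : nat) (c d : 'rV[R]_n) (k : nat) :=
  iter k (@iter_step R n) (c, d).

Definition zero_in_segment (R : realType) (n : nat) (c d : 'rV[R]_n) : Prop :=
  exists t : R, 0 <= t <= 1 /\ (1 - t) *: c + t *: d = 0.

(* Main.v *)
Require Import Defs.
From HB Require Import structures.
From mathcomp Require Import all_boot all_order all_algebra.
From mathcomp Require Import reals.
From mathcomp Require Import ring lra.
Import Order.TTheory GRing.Theory Num.Theory.
Local Open Scope ring_scope.

Lemma dot_comb {R : realType} {n} (c d : 'rV[R]_n) (x1 y1 x2 y2 : R) :
  dotv (x1 *: c + y1 *: d) (x2 *: c + y2 *: d) =
  x1 * x2 * dotv c c + (x1 * y2 + y1 * x2) * dotv c d + y1 * y2 * dotv d d.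
Proof.
rewrite /dotv !mulr_sumr -!big_split /=; apply: eq_bigr => i _; rewrite !mxE; ring.
Qed.

Lemma dot_ge0 {R : realType} {n} (c : 'rV[R]_n) : 0 <= dotv c c.
Proof. by rewrite /dotv; apply: sumr_ge0 => i _; rewrite -expr2 sqr_ge0. Qed.

Lemma comb_sub {R : realType} {n} (c d : 'rV[R]_n) (x1 y1 x2 y2 : R) :
  (x1 *: c + y1 *: d) - (x2 *: c + y2 *: d) = (x1 - x2) *: c + (y1 - y2) *: d.
Proof. apply/rowP => i; rewrite !mxE; ring. Qed.

Lemma sub_comb {R : realType} {n} (c d : 'rV[R]_n) : c - d = 1 *: c + (-1) *: d.
Proof. apply/rowP => i; rewrite !mxE; ring. Qed.

Definition GG {R : realType} {n} (P : 'rV[R]_n * 'rV[R]_n) :=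
  dotv P.1 P.1 * dotv P.2 P.2 - dotv P.1 P.2 ^+ 2.
Definition DD {R : realType} {n} (P : 'rV[R]_n * 'rV[R]_n) :=
  dotv (P.1 - P.2) (P.1 - P.2).
Definition Phi {R : realType} {n} (P : 'rV[R]_n * 'rV[R]_n) :=
  DD P ^+ 2 / GG P.

Lemma step_ok {R : realType} {n} (c d : 'rV[R]_n) :
  0 < GG (c, d) -> dotv c d <= 0 ->
  0 < GG (iter_step (c, d)) /\ Phi (iter_step (c, d)) <= Phi (c, d) - 1.
Proof.
rewrite /Phi /GG /DD /iter_step /normv /= => hG hp.
have Ecd : dotv c (c - d) = dotv c c - dotv c d.
  by rewrite {1}(_ : c = 1 *: c + 0 *: d) ?sub_comb ?dot_comb;
    [ring | apply/rowP => i; rewrite !mxE; ring].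
rewrite Ecd.
set a := dotv c c in hG Ecd *; set b := dotv d d in hG *; set p := dotv c d in hG hp Ecd *.
have a0 : 0 <= a := dot_ge0 c.
have b0 : 0 <= b := dot_ge0 d.
have ha : 0 < a by nra.
set r := Num.sqrt a; set s := Num.sqrt (a - p).
have hr : 0 < r by rewrite sqrtr_gt0.
have hs : 0 < s by rewrite sqrtr_gt0; lra.
have r2 : r ^+ 2 = a by rewrite sqr_sqrtr.
have s2 : s ^+ 2 = a - p by rewrite sqr_sqrtr //; lra.
have r0 : r != 0 by rewrite gt_eqF.
have s0 : s != 0 by rewrite gt_eqF.
set al := (a - p)^-1 - (r * s)^-1.
have Ed : d - p *: ((a - p)^-1 *: (c - d) - (r * s)^-1 *: c) =
          (- p * al) *: c + (1 + p / (a - p)) *: d.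
  by apply/rowP => i; rewrite !mxE /al; ring.
have Ec : c - a *: ((a - p)^-1 *: (c - d) - (r * s)^-1 *: c) =
          (1 - a * al) *: c + (a / (a - p)) *: d.
  by apply/rowP => i; rewrite !mxE /al; ring.
rewrite Ed Ec comb_sub !dot_comb (sub_comb c d) dot_comb -/a -/b -/p.
have hp' : p = r ^+ 2 - s ^+ 2 by rewrite r2 s2; ring.
have hb : 0 < a - p by lra.
split.
  set G' := (X in 0 < X).
  have EG : G' = (a * b - p ^+ 2) * a / (a - p).
    rewrite /G' /al -s2 hp' -r2; field; by rewrite s0 r0.
  by rewrite EG; apply: divr_gt0 => //; apply: mulr_gt0.
set G' := (X in _ / X <= _).
set D' := (X in X ^+ 2 / _ <= _).
have EG : G' = (a * b - p ^+ 2) * a / (a - p).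
  rewrite /G' /al -s2 hp' -r2; field; by rewrite s0 r0.
have ED : D' = a - p.
  rewrite /D' /al -s2 hp' -r2; field; by rewrite s0 r0.
rewrite EG ED.
have h1 : 0 <= (- p) * (a*b - p^+2) by apply: mulr_ge0; lra.
have key : (a - p)^+3 <= a * ((a+b-2 * p)^+2 - (a*b - p^+2)) by nra.
have -> : 1 * 1 * a + (1 * -1 + -1 * 1) * p + -1 * -1 * b = a + b - 2 * p by ring.
have Gn : a * b - p ^+ 2 != 0 by rewrite gt_eqF.
have an : a != 0 by rewrite gt_eqF.
have bn : a - p != 0 by rewrite gt_eqF.
have -> : (a - p) ^+ 2 / ((a * b - p ^+ 2) * a / (a - p)) = ((a - p)^+3 / a) / (a * b - p ^+ 2).
  by field; rewrite Gn an bn.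
have -> : (a + b - 2 * p) ^+ 2 / (a * b - p ^+ 2) - 1 = ((a + b - 2 * p) ^+ 2 - (a * b - p ^+ 2)) / (a * b - p ^+ 2).
  by field; rewrite Gn.
apply: ler_wpM2r; first by rewrite invr_ge0; lra.
rewrite ler_pdivrMr //; nra.
Qed.

Lemma dot0 {R : realType} {n} (u : 'rV[R]_n) : dotv u u = 0 -> u = 0.
Proof.
move=> h; apply/rowP => i; rewrite mxE.
have hF : forall j : 'I_n, predT j -> 0 <= u 0 j * u 0 j.
  by move=> j _; rewrite -expr2 sqr_ge0.
have := @psumr_eq0P R 'I_n predT (fun j => u 0 j * u 0 j) hF h i isT.
by move/eqP; rewrite mulf_eq0 orbb => /eqP.
Qed.

Lemma dot_gt0 {R : realType} {n} (u : 'rV[R]_n) : u != 0 -> 0 < dotv u u.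
Proof.
move=> hu; rewrite lt_neqAle dot_ge0 andbT eq_sym; apply/eqP => /dot0 h.
by rewrite h eqxx in hu.
Qed.

Lemma cs_aux {R : realType} {n} (c d : 'rV[R]_n) :
  dotv ((- dotv c d) *: c + dotv c c *: d) ((- dotv c d) *: c + dotv c c *: d)
  = dotv c c * (dotv c c * dotv d d - dotv c d ^+ 2).
Proof. rewrite dot_comb; ring. Qed.

Lemma iter_ok {R : realType} {n} (m : nat) (P : 'rV[R]_n * 'rV[R]_n) :
  0 < GG P ->
  (forall j, (j < m)%N -> dotv (iter j (@iter_step R n) P).1 (iter j (@iter_step R n) P).2 <= 0) ->
  0 < GG (iter m (@iter_step R n) P) /\ m%:R <= Phi P - Phi (iter m (@iter_step R n) P).
Proof.
move=> hG; elim: m => [|m IH] hj.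
  by split => //=; rewrite subrr.
have [IH1 IH2] := IH (fun j hjm => hj j (ltnW hjm)).
have hm := hj m (ltnSn m).
rewrite /=; move: IH1 IH2 hm; case: (iter m (@iter_step R n) P) => c d /= h1 h2 h3.
have [s1 s2] := step_ok c d h1 h3.
split => //; rewrite -natr1; lra.
Qed.

Lemma Phi_ge0 {R : realType} {n} (P : 'rV[R]_n * 'rV[R]_n) : 0 < GG P -> 0 <= Phi P.
Proof. by move=> h; rewrite /Phi divr_ge0 ?sqr_ge0 // ltW. Qed.

Theorem mainTheorem11 (R : realType) (n : nat) (c d : 'rV[R]_n)
  (hc : c != 0) (hd : d != 0) (hcd : c != d)
  (hseg : ~ zero_in_segment c d) :
  exists k : nat,
    [/\ (k%:R <= normv (c - d) ^+ 4 /
                 (normv c ^+ 2 * normv d ^+ 2 - dotv c d ^+ 2)),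
        0 < dotv (iterate c d k).1 (iterate c d k).2
      & forall j : nat, (j < k)%N ->
          dotv (iterate c d j).1 (iterate c d j).2 <= 0].
Proof.
have ha := dot_gt0 c hc; have hb := dot_gt0 d hd.
have Eb : normv (c - d) ^+ 4 / (normv c ^+ 2 * normv d ^+ 2 - dotv c d ^+ 2) = Phi (c, d).
  rewrite /Phi /DD /GG /normv /= !sqr_sqrtr ?dot_ge0 //.
  by rewrite (_ : 4%N = (2 * 2)%N) // exprM sqr_sqrtr ?dot_ge0.
rewrite Eb.
have CS : 0 <= GG (c, d).
  have := dot_ge0 ((- dotv c d) *: c + dotv c c *: d); rewrite cs_aux /GG /= => h.
  rewrite -(pmulr_rge0 _ ha); exact: h.
case: (ltrP 0 (dotv c d)) => hp.
  exists 0%N; split => //; rewrite /Phi divr_ge0 ?sqr_ge0 //.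
have hG : 0 < GG (c, d).
  rewrite lt_neqAle CS andbT; apply/negP => /eqP hG0.
  have := cs_aux c d; rewrite /GG /= in hG0; rewrite -hG0 mulr0 => /dot0 hv.
  apply: hseg; exists (dotv c c / (dotv c c - dotv c d)).
  have hap : 0 < dotv c c - dotv c d by lra.
  split.
    apply/andP; split; first by apply: divr_ge0; lra.
    by rewrite ler_pdivrMr //; lra.
  apply/rowP => i.
  have h : (- dotv c d *: c + dotv c c *: d) 0 i = (0 : 'rV[R]_n) 0 i by rewrite hv.
  move: h; rewrite !mxE => h.
  have hn : dotv c c - dotv c d != 0 by rewrite gt_eqF.
  rewrite -[LHS](mulfK hn).
  rewrite (_ : ((1 - dotv c c / (dotv c c - dotv c d)) * c 0 i + dotv c c / (dotv c c - dotv c d) * d 0 i) *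
    (dotv c c - dotv c d) = - dotv c d * c 0 i + dotv c c * d 0 i); last by field.
  by rewrite h mul0r.
pose Q := fun k => 0 < dotv (iterate c d k).1 (iterate c d k).2.
have exQ : exists k, Q k.
  pose m := Num.bound (Phi (c, d)).
  have hm : Phi (c, d) < m%:R by apply: archi_boundP; apply: Phi_ge0 _ hG.
  case: (boolP [exists j : 'I_m, Q j]) => [/existsP [j hj] | hne].
    by exists j.
  exfalso.
  have hj : forall j, (j < m)%N -> dotv (iterate c d j).1 (iterate c d j).2 <= 0.
    move=> j hjm; rewrite leNgt; apply/negP => hq.
    by move/existsPn: hne => /(_ (Ordinal hjm)); rewrite /Q hq.
  have [h1 h2] := iter_ok _ _ hG hj.
  have := Phi_ge0 _ h1; lra.
case: (ex_minnP exQ) => k hk hmin.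
have hj : forall j, (j < k)%N -> dotv (iterate c d j).1 (iterate c d j).2 <= 0.
  move=> j hjk; rewrite leNgt; apply/negP => hq.
  by have := hmin j hq; rewrite leqNgt hjk.
exists k; split => //.
have [h1 h2] := iter_ok _ _ hG hj.
have := Phi_ge0 _ h1; lra.
Qed.
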